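(* Fix a positive integer $n$, $\delta>0$, $\eta_0\in(0,1)$, $\lambda>0$, and $\epsilon_{\text{cov}},\epsilon_{\text{rel}}\in(0,1)$. Let the transmittance be deterministic, $\eta=\eta_0$, and let $\overline{n}_B\sim\mathrm{Exp}(\lambda)$ (density $\lambda e^{-\lambda x}$, $x\ge0$). Consider the risk-constrained program \[ \max_{q,R}\; qR \quad\text{s.t.}\quad \mathbb{P}\!\left[q>\tfrac{2\delta}{\sqrt{n}}\,c_{\text{cov}}(\eta_0,\overline{n}_B)\right]\le\epsilon_{\text{cov}},\quad \mathbb{P}\!\left[R>R_{\text{ach}}(\eta_0,\overline{n}_B)\right]\le\epsilon_{\text{rel}},\quad 0\le q\le1,\ 0\le R\le1. \] Then its optimum is $(q^*,R^* )=(q_{\max},R_{\max})$ with \[ q_{\max}=\min\!\left\{1,\ \frac{2\delta}{\sqrt n}\,k\sqrt{\frac{Z^2-1}{4\eta_0}}\right\},\qquad R_{\max}=\Big[1-H\big(\vec p(\eta_0,-\tfrac1\lambda\ln\epsilon_{\text{rel}})\big)\Big]^+, \] where $k=\dfrac{\sqrt{2\eta_0}}{1-\eta_0}$ and $Z=1-\dfrac{2\eta_0}{\lambda}\ln(1-\epsilon_{\text{cov}})$.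
   Context: Definitions: for $\eta\in(0,1)$ and $\overline{n}_B\ge0$, $c_{\text{cov}}(\eta,\overline{n}_B)=\dfrac{\sqrt{2\eta\overline{n}_B(1+\eta\overline{n}_B)}}{1-\eta}$; $p(\eta,\overline{n}_B)=1-\dfrac{\eta}{[1+(1-\eta)\overline{n}_B]^4}$; $\vec p(\eta,\overline{n}_B)=(1-\tfrac{3p}{4},\tfrac p4,\tfrac p4,\tfrac p4)$; $H(\vec p)=-\sum_i p_i\log_2p_i$ (with $0\log0=0$); $R_{\text{ach}}(\eta,\overline{n}_B)=(1-H(\vec p(\eta,\overline{n}_B)))^+$ with $(x)^+=\max(x,0)$. Probabilities are over the randomness of $\overline{n}_B$. *)

(* Defs.v *)
From HB Require Import structures.
From mathcomp Require Import all_boot all_order all_algebra.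
From mathcomp Require Import all_classical all_reals all_analysis.
Set Implicit Arguments. Unset Strict Implicit. Unset Printing Implicit Defensive.
Import Order.TTheory GRing.Theory Num.Theory.
Local Open Scope ring_scope.

Section defs.
Variable R : realType.

Definition c_cov (eta nB : R) : R :=
  Num.sqrt (2 * eta * nB * (1 + eta * nB)) / (1 - eta).

Definition p_dep (eta nB : R) : R := 1 - eta / (1 + (1 - eta) * nB) ^+ 4.

Definition pvec (eta nB : R) : seq R :=
  let p := p_dep eta nB in [:: 1 - 3 * p / 4; p / 4; p / 4; p / 4].

Definition xlog2x (x : R) : R := if x == 0 then 0 else x * (ln x / ln 2).

Definition entropy (s : seq R) : R := - \sum_(x <- s) xlog2x x.

Definition R_ach (eta nB : R) : R := Num.max (1 - entropy (pvec eta nB)) 0.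
End defs.

(* Main.v *)
Require Import Defs.
From HB Require Import structures.
From mathcomp Require Import all_boot all_order all_algebra.
From mathcomp Require Import all_classical all_reals all_analysis.
From mathcomp Require Import ring lra measurable_realfun.
Import Order.TTheory GRing.Theory Num.Theory.
Set Implicit Arguments. Unset Strict Implicit.
Local Open Scope ring_scope.

Section H1.
Variable R : realType.
Implicit Types x y p : R.

Lemma ln_sub x y : 0 < x -> 0 < y -> ln y - ln x <= y / x - 1.
Proof.
move=> x0 y0; rewrite -ln_div ?posrE //.
have hx : 0 < y / x by apply: divr_gt0.
have h := @le_ln1Dx R (y / x - 1) ltac:(lra).
by rewrite (addrC 1) subrK in h.
Qed.

Lemma xlnx_tangent x y : 0 < x -> 0 < y ->
  y * ln y + (ln y + 1) * (x - y) <= x * ln x.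
Proof.
move=> x0 y0; have h := @ln_sub x y x0 y0.
have h2 : x * (ln y - ln x) <= x * (y / x - 1) by rewrite ler_wpM2l // ltW.
have e : x * (y / x - 1) = y - x by field; rewrite gt_eqF.
rewrite e in h2; nra.
Qed.

Definition H0 p := - ((1 - 3 * p / 4) * ln (1 - 3 * p / 4) + 3 * ((p / 4) * ln (p / 4))).

Lemma H0_tangent p1 p2 : 0 < p1 <= 1 -> 0 < p2 <= 1 ->
  H0 p1 <= H0 p2 + (p1 - p2) * (3 / 4) * (ln (1 - 3 * p2 / 4) - ln (p2 / 4)).
Proof.
move=> /andP[h1 h1'] /andP[h2 h2'].
have t1 := @xlnx_tangent (1 - 3 * p1 / 4) (1 - 3 * p2 / 4) ltac:(lra) ltac:(lra).
have t2 := @xlnx_tangent (p1 / 4) (p2 / 4) ltac:(lra) ltac:(lra).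
rewrite /H0; lra.
Qed.

Lemma H0_ge0 p : 0 < p <= 1 -> 0 <= H0 p.
Proof.
move=> /andP[h1 h2].
have l1 : ln (1 - 3 * p / 4) <= 0 by apply: ln_le0; lra.
have l2 : ln (p / 4) <= 0 by apply: ln_le0; lra.
rewrite /H0; nra.
Qed.

Lemma lnratio_ge0 p : 0 < p <= 1 -> 0 <= ln (1 - 3 * p / 4) - ln (p / 4).
Proof.
move=> /andP[h1 h2]; rewrite subr_ge0 ler_ln ?posrE; lra.
Qed.

Lemma lnratio_le p : 0 < p <= 1 -> ln (1 - 3 * p / 4) - ln (p / 4) <= 4 / p - 4.
Proof.
move=> /andP[h1 h2].
have := @ln_sub (p / 4) (1 - 3 * p / 4) ltac:(lra) ltac:(lra).
have -> : (1 - 3 * p / 4) / (p / 4) - 1 = 4 / p - 4 by field; rewrite gt_eqF.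
done.
Qed.

Lemma H0_mono p1 p2 : 0 < p1 <= p2 -> p2 <= 1 -> H0 p1 <= H0 p2.
Proof.
move=> /andP[h1 h12] h2.
have := @H0_tangent p1 p2 ltac:(lra) ltac:(lra).
have := @lnratio_ge0 p2 ltac:(lra).
set L := ln _ - ln _; nra.
Qed.

End H1.

Section H2.
Variable R : realType.
Implicit Types x y p eta : R.

Lemma p_depE eta x : p_dep eta x = 1 - eta * (1 + (1 - eta) * x)^-1 ^+ 4.
Proof. by rewrite /p_dep exprVn. Qed.

Lemma p_dep_bounds eta x : 0 < eta < 1 -> 0 <= x -> 1 - eta <= p_dep eta x < 1.
Proof.
move=> /andP[e0 e1] x0; rewrite p_depE.
set s := (1 + (1 - eta) * x)^-1.
have X1 : 1 <= 1 + (1 - eta) * x by nra.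
have s0 : 0 < s by rewrite invr_gt0; lra.
have s1 : s <= 1 by rewrite invr_le1 ?unitfE; lra.
have a0 : 0 < s ^+ 4 by apply: exprn_gt0.
have a1 : s ^+ 4 <= 1 by apply: exprn_ile1; lra.
nra.
Qed.

Lemma inv_sub_le (X Y : R) : 1 <= X <= Y -> X^-1 - Y^-1 <= Y - X.
Proof.
move=> /andP[h1 h2].
have -> : X^-1 - Y^-1 = (Y - X) / (X * Y) by field; apply/andP; split; rewrite gt_eqF //; lra.
rewrite ler_pdivrMr; last nra.
have : 1 <= X * Y by nra.
nra.
Qed.

Lemma p_dep_mono_lip eta x y : 0 < eta < 1 -> 0 <= x <= y ->
  p_dep eta x <= p_dep eta y /\ p_dep eta y - p_dep eta x <= 4 * eta * (1 - eta) * (y - x).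
Proof.
move=> /andP[e0 e1] /andP[x0 xy]; rewrite !p_depE.
set X := 1 + (1 - eta) * x; set Y := 1 + (1 - eta) * y.
have X1 : 1 <= X by rewrite /X; nra.
have XY : X <= Y by rewrite /X /Y; nra.
have d := @inv_sub_le X Y ltac:(lra).
set s := X^-1; set t := Y^-1.
have t0 : 0 < t by rewrite invr_gt0; lra.
have s1 : s <= 1 by rewrite invr_le1 ?unitfE; lra.
have ts : t <= s by rewrite lef_pV2 ?posrE; lra.
have e4 : s ^+ 4 - t ^+ 4 = (s - t) * (s ^+ 3 + s ^+ 2 * t + s * t ^+ 2 + t ^+ 3) by ring.
have b3 : s ^+ 3 + s ^+ 2 * t + s * t ^+ 2 + t ^+ 3 <= 4.
  have : s ^+ 3 <= 1 by apply: exprn_ile1; lra.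
  have : s ^+ 2 <= 1 by apply: exprn_ile1; lra.
  have : t ^+ 2 <= 1 by apply: exprn_ile1; lra.
  have : t ^+ 3 <= 1 by apply: exprn_ile1; lra.
  have : 0 <= t ^+ 2 by apply: exprn_ge0; lra.
  have : 0 <= s ^+ 2 by apply: exprn_ge0; lra.
  nra.
have b0 : 0 <= s ^+ 3 + s ^+ 2 * t + s * t ^+ 2 + t ^+ 3.
  have : 0 <= t ^+ 2 by apply: exprn_ge0; lra.
  have : 0 <= s ^+ 2 by apply: exprn_ge0; lra.
  have : 0 <= t ^+ 3 by apply: exprn_ge0; lra.
  have : 0 <= s ^+ 3 by apply: exprn_ge0; lra.
  nra.
have YX : Y - X = (1 - eta) * (y - x) by rewrite /X /Y; ring.
have st4 : 0 <= s ^+ 4 - t ^+ 4 by rewrite e4; nra.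
have st4' : s ^+ 4 - t ^+ 4 <= 4 * (1 - eta) * (y - x).
  rewrite e4.
  have : (s - t) * (s ^+ 3 + s ^+ 2 * t + s * t ^+ 2 + t ^+ 3) <= (s - t) * 4.
    by rewrite ler_wpM2l //; lra.
  rewrite -/s -/t in d; lra.
split; nra.
Qed.

Lemma entropyE eta x : 0 < p_dep eta x <= 1 ->
  entropy (pvec eta x) = H0 (p_dep eta x) / ln 2.
Proof.
move=> /andP[h1 h2].
rewrite /entropy /pvec /= !big_cons big_nil /xlog2x.
move: h1 h2; set p := p_dep eta x => h1 h2.
rewrite !ifF; last 2 first.
- by apply/negbTE; rewrite gt_eqF //; lra.
- by apply/negbTE; rewrite gt_eqF //; lra.
have l2 : 0 < ln (2 : R) by apply: ln_gt0; lra.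
rewrite /H0; field; rewrite gt_eqF //.
Qed.

Lemma c_cov_mono eta x y : 0 < eta < 1 -> 0 <= x <= y -> c_cov eta x <= c_cov eta y.
Proof.
move=> /andP[e0 e1] /andP[x0 xy]; rewrite /c_cov ler_wpM2r //.
  by rewrite invr_ge0; lra.
have h1 : eta * x <= eta * y by nra.
have h2 : x * (1 + eta * x) <= y * (1 + eta * y) by nra.
apply: ler_wsqrtr; nra.
Qed.

Lemma ac_lt eta a q t : 0 < eta < 1 -> 0 < a -> 0 < q -> 0 <= t ->
  (a * c_cov eta t < q) <-> (2 * eta * t * (1 + eta * t) < (q * (1 - eta) / a) ^+ 2).
Proof.
move=> /andP[e0 e1] a0 q0 t0; rewrite /c_cov.
set X := 2 * eta * t * (1 + eta * t).
have X0 : 0 <= X by rewrite /X; nra.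
set s := Num.sqrt X; set w := q * (1 - eta) / a.
have s0 : 0 <= s := sqrtr_ge0 _.
have sX : s ^+ 2 = X := sqr_sqrtr X0.
have w0 : 0 < w by rewrite /w; apply: divr_gt0 => //; nra.
have e : a * (s / (1 - eta)) - q = (a / (1 - eta)) * (s - w).
  by rewrite /w; field; apply/andP; split; rewrite gt_eqF //; lra.
have k0 : 0 < a / (1 - eta) by apply: divr_gt0 => //; lra.
split => h.
- have : s < w.
    have : (a / (1 - eta)) * (s - w) < 0 by rewrite -e; lra.
    nra.
  move=> sw; rewrite -sX; nra.
- have sw : s < w.
    rewrite ltNge; apply/negP => ws.
    have : w ^+ 2 <= s ^+ 2 by nra.
    lra.
  have : (a / (1 - eta)) * (s - w) < 0 by nra.
  rewrite -e; lra.
Qed.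

Lemma poly_cont eta t w : 0 < eta -> 0 <= t -> 2 * eta * t * (1 + eta * t) < w ->
  exists t1, t < t1 /\ 2 * eta * t1 * (1 + eta * t1) < w.
Proof.
move=> e0 t0 h.
set d := w - 2 * eta * t * (1 + eta * t).
set M := 2 * eta * (1 + eta * (2 * t + 1)) + d + 1.
have d0 : 0 < d by rewrite /d; lra.
have M0 : 0 < M by rewrite /M; nra.
set hh := d / M.
have hM : hh * M = d by rewrite /hh; field; rewrite gt_eqF.
have h0 : 0 < hh by apply: divr_gt0.
have h1 : hh < 1.
  by rewrite /hh ltr_pdivrMr // mul1r /M; nra.
exists (t + hh); split; first lra.
have -> : 2 * eta * (t + hh) * (1 + eta * (t + hh)) =
  2 * eta * t * (1 + eta * t) + 2 * eta * hh * (1 + eta * (2 * t + hh)) by ring.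
have : 2 * eta * hh * (1 + eta * (2 * t + hh)) <= hh * (2 * eta * (1 + eta * (2 * t + 1))).
  have : eta * hh <= eta by nra.
  nra.
have k : hh * (2 * eta * (1 + eta * (2 * t + 1))) = d - hh * (d + 1).
  by rewrite -{1}hM /M; ring.
have k2 : 0 < hh * (d + 1) by apply: mulr_gt0 => //; lra.
move: k k2; rewrite /d; lra.
Qed.

End H2.

Local Open Scope classical_set_scope.
Section H3.
Variable R : realType.

Lemma my_le_int (f1 f2 : R -> \bar R) : (forall x, (0 <= f1 x)%E) ->
  (forall x, (f1 x <= f2 x)%E) ->
  (\int[lebesgue_measure]_x f1 x <= \int[lebesgue_measure]_x f2 x)%E.
Proof.
move=> f10 f12.
have f20 : forall x, (0 <= f2 x)%E by move=> x; exact: le_trans (f10 x) (f12 x).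
rewrite !ge0_integralTE //.
apply: ereal_sup_le => _ [h /= hf <-].
by exists h => //= x; exact: le_trans (hf x) (f12 x).
Qed.

Lemma P_le (lam : R) (A B : set R) : 0 < lam ->
  (forall x, 0 <= x -> A x -> B x) ->
  (exponential_prob lam A <= exponential_prob lam B)%E.
Proof.
move=> l0 AB; rewrite /exponential_prob integral_mkcond [in X in (_ <= X)%E]integral_mkcond. apply: my_le_int => x; rewrite !patchE.
  by case: ifP => _ //; rewrite lee_fin exponential_pdf_ge0 // ltW.
case: (ltP x 0) => [xlt|xge].
  by rewrite lt0_exponential_pdf //; case: ifP; case: ifP.
case: (boolP (x \in A)) => xA; last first.
  by case: ifP => _ //; rewrite lee_fin exponential_pdf_ge0 // ltW.
have xB : x \in B by rewrite inE; apply: AB => //; rewrite inE in xA.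
by rewrite xB.
Qed.

Lemma P_compl (lam : R) (A : set R) : 0 < lam -> measurable A ->
  (exponential_prob lam A + exponential_prob lam (~` A))%E = 1%E.
Proof.
move=> l0 mA.
have mEex : measurable_fun [set: R] (EFin \o (exponential_pdf lam : R -> R) : R -> \bar R).
  by apply/measurable_EFinP; exact: measurable_exponential_pdf.
rewrite /exponential_prob -ge0_integral_setU.
- by rewrite setUv; exact: integral_exponential_pdf.
- exact: mA.
- exact: measurableC.
- by rewrite setUv.
- by move=> x _; rewrite lee_fin exponential_pdf_ge0 // ltW.
- exact/disj_setPCl.
Qed.

Lemma P_ge0 (lam : R) (A : set R) : 0 < lam -> (0 <= exponential_prob lam A)%E.
Proof.
move=> l0; rewrite /exponential_prob; apply: integral_ge0 => x _.
by rewrite lee_fin exponential_pdf_ge0 // ltW.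
Qed.

Lemma ext_sum (a b : \bar R) : (0 <= a)%E -> (0 <= b)%E -> (a + b)%E = 1%E ->
  exists a' b' : R, [/\ a = a'%:E, b = b'%:E & a' + b' = 1].
Proof.
case: a => [a'| |]; case: b => [b'| |] //= _ _.
by move=> [] h; exists a', b'.
Qed.

End H3.

Theorem lemma1 (R : realType) (n : nat) (delta eta0 lam eps_cov eps_rel : R) :
  (0 < n)%N -> 0 < delta -> 0 < eta0 < 1 -> 0 < lam ->
  0 < eps_cov < 1 -> 0 < eps_rel < 1 ->
  let P := exponential_prob lam in
  let feasible (q r : R) :=
    [/\ (P [set nB : R | (q > 2 * delta / Num.sqrt n%:R * c_cov eta0 nB)%R] <= eps_cov%:E)%E,
        (P [set nB : R | (r > R_ach eta0 nB)%R] <= eps_rel%:E)%E,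
        0 <= q <= 1 & 0 <= r <= 1] in
  let k := Num.sqrt (2 * eta0) / (1 - eta0) in
  let Z := 1 - 2 * eta0 / lam * ln (1 - eps_cov) in
  let q_max := Num.min 1 (2 * delta / Num.sqrt n%:R * k *
                          Num.sqrt ((Z ^+ 2 - 1) / (4 * eta0))) in
  let R_max := Num.max (1 - entropy (pvec eta0 (- lam^-1 * ln eps_rel))) 0 in
  feasible q_max R_max /\
  (forall q r : R, feasible q r -> q * r <= q_max * R_max).
Proof.
move=> n0 d0 /andP[e0 e1] l0 /andP[c0 c1] /andP[r0 r1] P feasible k Z q_max R_max.
rewrite /feasible /P.
set a := 2 * delta / Num.sqrt n%:R.
have a0 : 0 < a.
  rewrite /a; apply: divr_gt0; first lra.
  by rewrite sqrtr_gt0 ltr0n.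
set ts := - lam^-1 * ln (1 - eps_cov).
have lc : ln (1 - eps_cov) < 0 by apply: ln_lt0; lra.
have li : 0 < lam^-1 by rewrite invr_gt0.
have ts0 : 0 < ts by rewrite /ts; nra.
have ets : expR (- lam * ts) = 1 - eps_cov.
  rewrite /ts (_ : - lam * (- lam^-1 * ln (1 - eps_cov)) = ln (1 - eps_cov)).
    by rewrite lnK // posrE; lra.
  by field; rewrite gt_eqF.
set ss := - lam^-1 * ln eps_rel.
have lr : ln eps_rel < 0 by apply: ln_lt0; lra.
have ss0 : 0 < ss by rewrite /ss; nra.
have ess : expR (- lam * ss) = eps_rel.
  rewrite /ss (_ : - lam * (- lam^-1 * ln eps_rel) = ln eps_rel).
    by rewrite lnK // posrE; lra.
  by field; rewrite gt_eqF.
set Q := a * c_cov eta0 ts.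
have Ze : (Z ^+ 2 - 1) / (4 * eta0) = ts * (1 + eta0 * ts).
  by rewrite /Z /ts; field; apply/andP; split; rewrite gt_eqF.
have kE : k * Num.sqrt (ts * (1 + eta0 * ts)) = c_cov eta0 ts.
  rewrite /k /c_cov mulrAC -sqrtrM; last lra.
  by congr (Num.sqrt _ / _); ring.
have qmaxE : q_max = Num.min 1 Q by rewrite /q_max Ze -mulrA kE.
have Q0 : 0 < Q.
  rewrite /Q /c_cov; apply: mulr_gt0 => //; apply: divr_gt0; last lra.
  by rewrite sqrtr_gt0; nra.
have l2 : 0 < ln (2 : R) by apply: ln_gt0; lra.
have pb x : 0 <= x -> 1 - eta0 <= p_dep eta0 x < 1.
  by move=> x0; apply: p_dep_bounds => //; apply/andP.
have R_achE x : 0 <= x -> R_ach eta0 x = Num.max (1 - H0 (p_dep eta0 x) / ln 2) 0.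
  move=> x0; rewrite /R_ach entropyE //; have := pb x x0; lra.
have Rmono x y : 0 <= x <= y -> R_ach eta0 y <= R_ach eta0 x.
  move=> /andP[x0 xy]; rewrite !R_achE //; last lra.
  have [pm _] := @p_dep_mono_lip R eta0 x y ltac:(lra) ltac:(lra).
  have := pb x x0; have := pb y ltac:(lra) => py px.
  have hm : H0 (p_dep eta0 x) <= H0 (p_dep eta0 y) by apply: H0_mono; lra.
  have : H0 (p_dep eta0 x) / ln 2 <= H0 (p_dep eta0 y) / ln 2 by rewrite ler_pM2r // invr_gt0.
  move=> h; rewrite ge_max !le_max; apply/andP; split; apply/orP; [left|right]; lra.
have RmaxE : R_max = R_ach eta0 ss by [].
have Rmax0 : 0 <= R_max by rewrite le_max lexx orbT.
have pss := pb ss (ltW ss0).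
have Rmax_ge : 1 - H0 (p_dep eta0 ss) / ln 2 <= R_max.
  by rewrite RmaxE R_achE ?(ltW ss0) // le_max lexx.
have qmax_le : q_max <= Q by rewrite qmaxE ge_min lexx orbT.
have qmax1 : q_max <= 1 by rewrite qmaxE ge_min lexx.
have qmax0 : 0 <= q_max by rewrite qmaxE le_min ler01 /= ltW.
have Rmax1 : R_max <= 1.
  rewrite /R_max ge_max ler01 andbT entropyE; last by have := pss; lra.
  have := @H0_ge0 R (p_dep eta0 ss) ltac:(lra).
  move=> h; have : 0 <= H0 (p_dep eta0 ss) / ln 2 by apply: divr_ge0 => //; lra.
  lra.
split.
  rewrite /feasible -/a; split.
  - apply: (le_trans (P_le (B := `[0, ts]) l0 _)).
      move=> x x0 /= h; rewrite in_itv /= x0 /=; rewrite leNgt; apply/negP => tx.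
      have hc := @c_cov_mono R eta0 ts x ltac:(lra) ltac:(lra).
      have : Q <= a * c_cov eta0 x by rewrite /Q ler_wpM2l // ltW.
      lra.
    by rewrite exponential_prob_itv0c // ets lee_fin; lra.
  - have mA : measurable (`]-oo, ss] : set R) by exact: measurable_itv.
    have := P_compl l0 mA.
    move/(ext_sum (P_ge0 _ l0) (P_ge0 _ l0)) => [a' [b' [ea eb ab]]].
    have h0 : forall x, 0 <= x -> (`[0, ss] : set R) x -> (`]-oo, ss] : set R) x.
      by move=> x x0; rewrite /= !in_itv /= => /andP[_ ->].
    have h1 := P_le l0 h0.
    rewrite exponential_prob_itv0c // ess ea lee_fin in h1.
    apply: (le_trans (P_le (B := ~` `]-oo, ss]) l0 _)).
      move=> x x0 /= h hx; rewrite /= in_itv /= in hx.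
      have := Rmono x ss ltac:(lra); rewrite -RmaxE; lra.
    by rewrite eb lee_fin; lra.
  - by rewrite qmax0 qmax1.
  - by rewrite Rmax0 Rmax1.
have e01 : 0 < eta0 < 1 by apply/andP.
move=> q r [hq hr /andP[q0 q1] /andP[rr0 rr1]].
have qle : q <= q_max.
  rewrite qmaxE le_min q1 /= leNgt; apply/negP => Qq.
  have qpos : 0 < q by lra.
  have hX := (@ac_lt R eta0 a q ts e01 a0 qpos (ltW ts0)).1 Qq.
  have [t1 [tt1 ht1]] := poly_cont e0 (ltW ts0) hX.
  have ht1' := (@ac_lt R eta0 a q t1 e01 a0 qpos ltac:(lra)).2 ht1.
  have h0 : forall x, 0 <= x -> (`[0, t1] : set R) x -> [set nB | a * c_cov eta0 nB < q] x.
    move=> x x0; rewrite /= in_itv /= => /andP[_ xt].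
    have hc := @c_cov_mono R eta0 x t1 e01 ltac:(apply/andP; split; lra).
    have : a * c_cov eta0 x <= a * c_cov eta0 t1 by rewrite ler_wpM2l // ltW.
    lra.
  have := le_trans (P_le l0 h0) hq.
  rewrite exponential_prob_itv0c; last lra.
  rewrite lee_fin => h.
  have : expR (- lam * t1) < expR (- lam * ts) by rewrite ltr_expR !mulNr ltrN2 ltr_pM2l.
  lra.
have rle : r <= R_max.
  rewrite leNgt; apply/negP => Rr.
  set D := r - 1 + H0 (p_dep eta0 ss) / ln 2.
  have D0 : 0 < D by rewrite /D; lra.
  have Dl : 0 < D * ln 2 by apply: mulr_gt0.
  set h := Num.min (ss / 2) (D * ln 2 / 24).
  have h0 : 0 < h by rewrite lt_min; apply/andP; split; [lra | apply: divr_gt0].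
  have hs : h <= ss / 2 by rewrite ge_min lexx.
  have hD : h <= D * ln 2 / 24 by rewrite ge_min lexx orbT.
  set t' := ss - h.
  have t'0 : 0 < t' by rewrite /t'; lra.
  have pt := pb t' (ltW t'0).
  have tts : 0 <= t' <= ss by apply/andP; split; rewrite /t'; lra.
  have [pm lip] := @p_dep_mono_lip R eta0 t' ss e01 tts.
  have tan := @H0_tangent R (p_dep eta0 ss) (p_dep eta0 t') ltac:(lra) ltac:(lra).
  have L0 := @lnratio_ge0 R (p_dep eta0 t') ltac:(lra).
  have Lb := @lnratio_le R (p_dep eta0 t') ltac:(lra).
  move: tan L0 Lb.
  set L := ln (1 - 3 * p_dep eta0 t' / 4) - ln (p_dep eta0 t' / 4) => tan L0 Lb.
  have Lb2 : L * (1 - eta0) <= 4.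
    have : 4 / p_dep eta0 t' * (1 - eta0) <= 4.
      rewrite mulrAC ler_pdivrMr; lra.
    have : L * (1 - eta0) <= (4 / p_dep eta0 t' - 4) * (1 - eta0) by rewrite ler_wpM2r //; lra.
    lra.
  have ts' : ss - t' = h by rewrite /t'; ring.
  move: tan lip; rewrite ts'.
  set Δ := p_dep eta0 ss - p_dep eta0 t' => tan Δb.
  have Δ0 : 0 <= Δ by rewrite /Δ; lra.
  have prod : Δ * (3/4) * L <= 12 * h.
    have : Δ * L <= 4 * eta0 * (1 - eta0) * h * L by rewrite ler_wpM2r.
    have : 4 * eta0 * h * (L * (1 - eta0)) <= 4 * eta0 * h * 4.
      by rewrite ler_wpM2l //; apply: mulr_ge0; [apply: mulr_ge0|]; lra.
    have : eta0 * h <= h by rewrite -[leRHS]mul1r ler_wpM2r // ltW.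
    lra.
  have key : H0 (p_dep eta0 ss) - H0 (p_dep eta0 t') < D * ln 2 by lra.
  have Rt : R_ach eta0 t' < r.
    rewrite R_achE; last lra.
    rewrite gt_max; apply/andP; split; last lra.
    have e : H0 (p_dep eta0 t') / ln 2 - (H0 (p_dep eta0 ss) / ln 2 - D) =
      (H0 (p_dep eta0 t') - H0 (p_dep eta0 ss) + D * ln 2) / ln 2.
      by field; rewrite gt_eqF.
    have : 0 < (H0 (p_dep eta0 t') - H0 (p_dep eta0 ss) + D * ln 2) / ln 2.
      by apply: divr_gt0 => //; lra.
    rewrite -e /D; lra.
  have mA : measurable (`]-oo, t'[ : set R) by exact: measurable_itv.
  have := P_compl l0 mA.
  move/(ext_sum (P_ge0 _ l0) (P_ge0 _ l0)) => [a' [b' [ea eb ab]]].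
  have h0' : forall x, 0 <= x -> (`]-oo, t'[ : set R) x -> (`[0, t'] : set R) x.
    by move=> x x0; rewrite /= !in_itv /= x0 => /ltW ->.
  have h1 := P_le l0 h0'.
  rewrite ea exponential_prob_itv0c // lee_fin in h1.
  have h2 : forall x, 0 <= x -> (~` `]-oo, t'[ : set R) x -> [set nB | R_ach eta0 nB < r] x.
    move=> x x0 /= hx.
    have xt : t' <= x.
      by rewrite leNgt; apply/negP => xt; apply: hx; rewrite /= in_itv.
    have := Rmono t' x ltac:(apply/andP; split; lra); lra.
  have h3 := le_trans (P_le l0 h2) hr.
  rewrite eb lee_fin in h3.
  have : expR (- lam * ss) < expR (- lam * t') by rewrite ltr_expR !mulNr ltrN2 ltr_pM2l // /t'; lra.
  lra.
by apply: ler_pM.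
Qed.
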